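(* For every finite set $J$, the signatures $\mathrm{Even}_J$, $\mathrm{Odd}_J$ and $\mathrm{NAE}_J$ are windable.
   Context: $\mathrm{Even}_J,\mathrm{Odd}_J,\mathrm{NAE}_J:\{0,1\}^J\to\{0,1\}$: $\mathrm{Even}_J(x)=1$ iff $\sum_ix_i$ is even; $\mathrm{Odd}_J(x)=1$ iff $\sum_ix_i$ is odd; $\mathrm{NAE}_J(x)=1$ iff $1\le\sum_ix_i\le|J|-1$. For $x,y\in\{0,1\}^J$, $x\oplus y$ is coordinatewise addition mod 2, and $\mathbf S$ is the characteristic vector of $S\subseteq J$. For $z\in\{0,1\}^J$, $\mathrm{Match}'(z)$ is the set of partitions of $\{i:z_i=1\}$ into blocks of size 1 or 2. $F:\{0,1\}^J\to\mathbb{Q}_{\ge0}$ is windable if there exist $B(x,y,M)\ge0$ for all $x,y\in\{0,1\}^J$ and $M\in\mathrm{Match}'(x\oplus y)$ with (1) $F(x)F(y)=\sum_{M\in\mathrm{Match}'(x\oplus y)}B(x,y,M)$ for all $x,y$, and (2) $B(x,y,M)=B(x\oplus\mathbf S,y\oplus\mathbf S,M)$ for all $x,y$ and all $S\in M\in\mathrm{Match}'(x\oplus y)$. *)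

(* Defs.v *)
From HB Require Import structures.
From mathcomp Require Import all_boot all_order all_algebra.
Set Implicit Arguments. Unset Strict Implicit. Unset Printing Implicit Defensive.
Import Order.TTheory GRing.Theory Num.Theory.

Local Open Scope ring_scope.

Definition bvec (J : finType) := {ffun J -> bool}.

Definition xorv (J : finType) (x y : bvec J) : bvec J := [ffun i => x i (+) y i].

Definition charv (J : finType) (S : {set J}) : bvec J := [ffun i => i \in S].

Definition weight (J : finType) (x : bvec J) : nat := #|[set i | x i]|.

Definition Even (J : finType) (x : bvec J) : rat :=
  if ~~ odd (weight x) then 1 else 0.
Definition Odd (J : finType) (x : bvec J) : rat :=
  if odd (weight x) then 1 else 0.
Definition NAE (J : finType) (x : bvec J) : rat :=
  if (1 <= weight x <= #|J| - 1)%N then 1 else 0.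

Definition Match' (J : finType) (z : bvec J) : {set {set {set J}}} :=
  [set M : {set {set J}} | partition M [set i | z i]
                          & [forall S in M, (#|S| == 1)%N || (#|S| == 2)%N]].

Definition windable (J : finType) (F : bvec J -> rat) : Prop :=
  (forall x, 0 <= F x) /\
  exists B : bvec J -> bvec J -> {set {set J}} -> rat,
    (forall x y M, M \in Match' (xorv x y) -> 0 <= B x y M) /\
    (forall x y, F x * F y = \sum_(M in Match' (xorv x y)) B x y M) /\
    (forall x y M S, M \in Match' (xorv x y) -> S \in M ->
        B x y M = B (xorv x (charv S)) (xorv y (charv S)) M).

(* Main.v *)
Require Import Defs.
From HB Require Import structures.
From mathcomp Require Import all_boot all_order all_algebra zify ring.
Set Implicit Arguments. Unset Strict Implicit. Unset Printing Implicit Defensive.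
Import Order.TTheory GRing.Theory Num.Theory.

Lemma card_set_sum (J : finType) (p : pred J) :
  #|[set k | p k]| = (\sum_(k : J) (p k : nat))%N.
Proof.
rewrite -sum1_card big_mkcond /=; apply: eq_bigr => k _; rewrite inE.
by case: (p k).
Qed.

Lemma odd_card_xor (J : finType) (a b : pred J) :
  odd #|[set k | a k (+) b k]| = odd #|[set k | a k]| (+) odd #|[set k | b k]|.
Proof.
rewrite !card_set_sum !(big_morph _ oddD (erefl : odd 0 = false)).
under eq_bigr do rewrite oddb.
under [X in _ = X (+) _]eq_bigr do rewrite oddb.
under [X in _ = _ (+) X]eq_bigr do rewrite oddb.
by rewrite big_split.
Qed.

Lemma pm_exists (J : finType) (n : nat) (S : {set J}) :
  #|S| = n.*2 -> exists P : {set {set J}},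
    partition P S && [forall B in P, #|B| == 2].
Proof.
elim: n S => [|n IH] S hS.
  exists set0; move/eqP: hS; rewrite cards_eq0 => /eqP ->.
  rewrite partition_set0 eqxx /=; apply/forall_inP => B; by rewrite inE.
have : 0 < #|S| by rewrite hS doubleS.
case/card_gt0P => i iS.
have : 0 < #|S :\ i|.
  by have := cardsD1 i S; rewrite iS hS doubleS add1n => -[<-].
case/card_gt0P => j /setD1P [ji jS].
set S' := S :\: [set i; j].
have hS' : #|S'| = n.*2.
  have := cardsID [set i; j] S.
  have -> : S :&: [set i; j] = [set i; j].
    by apply/setIidPr; apply/subsetP => k; rewrite !inE => /orP [] /eqP ->.
  rewrite cards2 eq_sym ji hS doubleS /S'; lia.
have [P' /andP [hP' hB']] := IH S' hS'.
exists ([set i; j] |: P'); apply/andP; split.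
  have -> : S = [set i; j] :|: S'.
    apply/setP => k; rewrite /S' !inE; case: (k =P i) => [->|] /=; first by rewrite iS.
    by case: (k =P j) => [->|] //=; rewrite jS.
  apply: partitionU1 => //.
    by apply/set0Pn; exists i; rewrite !inE eqxx.
  by rewrite /S' disjoint_sym disjoints_subset; apply/subsetP => k; rewrite !inE; case/andP.
apply/forall_inP => B /setU1P [->|BP].
  by rewrite cards2 (eq_sym i) ji.
exact: (forall_inP hB').
Qed.

Definition pm (J : finType) (S : {set J}) : {set {set J}} :=
  odflt set0 [pick P : {set {set J}} | partition P S && [forall B in P, #|B| == 2]].

Lemma pm_spec (J : finType) (S : {set J}) : ~~ odd #|S| -> partition (pm S) S.
Proof.
move=> ev; have [|P hP] := pm_exists (n := #|S|./2) (S := S).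
  by have := odd_double_half #|S|; rewrite (negbTE ev) add0n.
rewrite /pm; case: pickP => [P' /andP [] //|/(_ P)]; by rewrite hP.
Qed.

Lemma pm_block (J : finType) (S B : {set J}) :
  B \in pm S -> (#|B| == 2) && (B \subset S).
Proof.
rewrite /pm; case: pickP => [P /andP [hP hB] BP|_]; last by rewrite inE.
by rewrite (forall_inP hB B BP) (partitionS hP BP).
Qed.

Definition canon (J : finType) (D S : {set J}) : {set {set J}} :=
  pm S :|: [set [set i] | i in D :\: S].

Lemma partitionUU (J : finType) (P Q : {set {set J}}) (A B : {set J}) :
  partition P A -> partition Q B -> [disjoint A & B] -> partition (P :|: Q) (A :|: B).
Proof.
move=> /and3P [/eqP cP tP nP] /and3P [/eqP cQ tQ nQ] dAB.
apply/and3P; split.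
- by rewrite /cover bigcup_setU -/(cover P) -/(cover Q) cP cQ.
- by rewrite setUC; apply: trivIsetU => //; rewrite cP cQ disjoint_sym.
- by rewrite in_setU negb_or nP nQ.
Qed.

Lemma part_singles (J : finType) (A : {set J}) : partition [set [set i] | i in A] A.
Proof.
have n0 : set0 \notin [set [set i] | i in A].
  by apply/imsetP => -[i _] /esym/eqP; rewrite -cards_eq0 cards1.
apply/and3P; split => //.
- rewrite cover_imset; apply/eqP/setP => k; apply/bigcupP/idP => [[i iA]|kA].
    by rewrite inE => /eqP ->.
  by exists k; rewrite ?inE.
- case: (@trivIimset _ _ (mem A) (fun i => [set i])) => // i j _ _ ji.
  by rewrite disjoints1 inE eq_sym.
Qed.

Lemma canon_part (J : finType) (D S : {set J}) :
  S \subset D -> ~~ odd #|S| -> partition (canon D S) D.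
Proof.
move=> sSD ev.
have eD : S :|: (D :\: S) = D.
  apply/setP => k; rewrite !inE; case kS: (k \in S) => //=.
  by rewrite (subsetP sSD k kS).
rewrite -{2}eD; apply: partitionUU (pm_spec ev) (part_singles _) _.
by rewrite disjoints_subset; apply/subsetP => k; rewrite !inE => ->.
Qed.

Lemma canon_blocks (J : finType) (D S B : {set J}) : B \in canon D S ->
  ((#|B| == 2) && (B \subset S)) || [exists i, (i \in D :\: S) && (B == [set i])].
Proof.
case/setUP => [/pm_block -> //|/imsetP [i iD ->]].
by apply/orP; right; apply/existsP; exists i; rewrite iD eqxx.
Qed.

Lemma canon_match (J : finType) (x y : bvec J) (S : {set J}) :
  S \subset [set i | xorv x y i] -> ~~ odd #|S| ->
  canon [set i | xorv x y i] S \in Match' (xorv x y).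
Proof.
move=> sS ev; rewrite inE canon_part //=.
apply/forall_inP => B /canon_blocks /orP [/andP [-> _]|/existsP [i /andP [_ /eqP ->]]].
  by rewrite orbT.
by rewrite cards1.
Qed.

Lemma xorvK (J : finType) (x y s : bvec J) :
  xorv (xorv x s) (xorv y s) = xorv x y.
Proof. by apply/ffunP => i; rewrite !ffunE; case: (x i); case: (y i); case: (s i). Qed.

Lemma weight_xor (J : finType) (x y : bvec J) :
  odd (weight (xorv x y)) = odd (weight x) (+) odd (weight y).
Proof.
rewrite /weight -(odd_card_xor (fun i => x i) (fun i => y i)).
by congr (odd _); apply: eq_card => i; rewrite !inE ffunE.
Qed.

Lemma weight_charv (J : finType) (S : {set J}) : weight (charv S) = #|S|.
Proof. by rewrite /weight; apply: eq_card => i; rewrite !inE ffunE. Qed.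

Local Open Scope ring_scope.

Lemma parity_windable (J : finType) (G : bool -> rat) :
  (forall b, 0 <= G b) -> (forall b c, G b * G c != 0 -> b = c) ->
  windable (fun x : bvec J => G (odd (weight x))).
Proof.
move=> G0 GG; split => [x|]; first exact: G0.
exists (fun x y M => G (odd (weight x)) * G (odd (weight y)) *
          (M == canon [set i | xorv x y i] [set i | xorv x y i])%:R).
split; [|split].
- by move=> x y M _; rewrite !mulr_ge0.
- move=> x y; rewrite -mulr_sumr.
  case: (eqVneq (G (odd (weight x)) * G (odd (weight y))) 0) => [->|nz].
    by rewrite mul0r.
  have hp := GG _ _ nz.
  have ev : ~~ odd #|[set i | xorv x y i]|.
    by have := weight_xor x y; rewrite /weight => ->; rewrite hp addbb.
  rewrite (bigD1 (canon [set i | xorv x y i] [set i | xorv x y i])) /=;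
    last by apply: canon_match.
  by rewrite eqxx big1 ?addr0 ?mulr1 // => M /andP [_ /negbTE ->].
- move=> x y M S hM hS; rewrite xorvK.
  case: (eqVneq M (canon [set i | xorv x y i] [set i | xorv x y i])) => [eM|];
    last by move=> _; rewrite !mulr0.
  move: hS; rewrite eM => /canon_blocks /orP [/andP [/eqP S2 _]|/existsP [i]];
    last by rewrite setDv inE.
  by rewrite !weight_xor weight_charv S2 !addbF.
Qed.

Definition par (J : finType) (x : bvec J) (S : {set J}) := odd #|[set k in S | x k]|.

Lemma par_xor (J : finType) (x y : bvec J) S : par (xorv x y) S = par x S (+) par y S.
Proof.
rewrite /par -(odd_card_xor (fun k => (k \in S) && x k) (fun k => (k \in S) && y k)).
by congr (odd _); apply: eq_card => k; rewrite !inE ffunE; case: (k \in S).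
Qed.

Lemma par_block (J : finType) (S S0 : {set J}) :
  ((#|S0| == 2) && (S0 \subset S)) || [exists i, (i \notin S) && (S0 == [set i])] ->
  par (charv S0) S = false.
Proof.
case/orP => [/andP [/eqP c2 sub]|/existsP [i /andP [iS /eqP ->]]].
  rewrite /par; have -> : [set k in S | charv S0 k] = S0; last by rewrite c2.
  apply/setP => k; rewrite !inE ffunE; case kS0: (k \in S0); last by rewrite andbF.
  by rewrite (subsetP sub k kS0).
rewrite /par; have -> : [set k in S | charv [set i] k] = set0; last by rewrite cards0.
apply/setP => k; rewrite !inE ffunE inE; case: (k =P i) => [->|]; last by rewrite andbF.
by rewrite (negbTE iS).
Qed.

Definition Ev (J : finType) (D : {set J}) := [set S : {set J} | (S \subset D) && ~~ odd #|S|].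

Definition phi (J : finType) (i j : J) (S : {set J}) :=
  [set k | (k \in S) (+) ((k == i) || (k == j))].

Lemma phiK (J : finType) (i j : J) : involutive (phi i j).
Proof. by move=> S; apply/setP => k; rewrite !inE addbK. Qed.

Lemma phi_map (J : finType) (x : bvec J) (D : {set J}) (i j : J) S :
  i \in D -> j \in D -> x i != x j -> S \in Ev D ->
  (phi i j S \in Ev D) && (par x (phi i j S) == ~~ par x S).
Proof.
move=> iD jD xij; rewrite !inE => /andP [sSD evS].
have ij : i != j by apply: contraNneq xij => ->.
apply/andP; split; first (apply/andP; split).
- apply/subsetP => k; rewrite inE.
  case kS: (k \in S); first by rewrite (subsetP sSD k kS).
  by case/orP => /eqP ->.
- rewrite (odd_card_xor (fun k => k \in S) (fun k => (k == i) || (k == j))).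
  have -> : #|[set k | k \in S]| = #|S| by apply: eq_card => k; rewrite inE.
  have -> : #|[set k | (k == i) || (k == j)]| = 2.
    rewrite (_ : [set k | _] = [set i; j]) ?cards2 ?ij //; by apply/setP => k; rewrite !inE.
  by rewrite (negbTE evS).
- rewrite /par.
  have -> : [set k in phi i j S | x k] =
      [set k | ((k \in S) && x k) (+) (((k == i) || (k == j)) && x k)].
    by apply/setP => k; rewrite !inE; case: (x k); rewrite ?andbT ?andbF.
  rewrite odd_card_xor.
  have -> : #|[set k | ((k == i) || (k == j)) && x k]| = 1%N.
    rewrite (_ : [set k | _] = if x i then [set i] else [set j]).
      by case: (x i); rewrite cards1.
    have xj : x j = ~~ x i by move: xij; case: (x i); case: (x j).
    apply/setP => k; rewrite !inE.
    have [->|ki] := eqVneq k i.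
      by case: (x i) xj => xj /=; rewrite inE ?eqxx // (negbTE ij).
    rewrite /=.
    have [->|kj] := eqVneq k j.
      by case: (x i) xj => xj /=; rewrite inE ?eqxx ?xj // eq_sym (negbTE ij).
    by case: (x i); rewrite inE ?(negbTE ki) ?(negbTE kj).
  by rewrite /= addbT.
Qed.

Lemma count_par (J : finType) (x : bvec J) (D : {set J}) (i j : J) :
  i \in D -> j \in D -> x i != x j ->
  (#|[set S in Ev D | par x S]| * 2 = #|Ev D|)%N.
Proof.
move=> iD jD xij.
have half b : (#|[set S in Ev D | par x S == b]| <= #|[set S in Ev D | par x S == ~~ b]|)%N.
  rewrite -(card_imset _ (can_inj (phiK i j))).
  apply: subset_leq_card; apply/subsetP => T /imsetP [S]; rewrite inE => /andP [SE /eqP pS] ->.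
  have /andP [h1 /eqP h2] := phi_map iD jD xij SE.
  by rewrite inE h1 h2 pS eqxx.
have e1 : #|[set S in Ev D | par x S]| = #|[set S in Ev D | par x S == true]|.
  by apply: eq_card => S; rewrite !inE eqb_id.
have e2 : #|[set S in Ev D | ~~ par x S]| = #|[set S in Ev D | par x S == false]|.
  by apply: eq_card => S; rewrite !inE eqbF_neg.
have := cardsID [set S | par x S] (Ev D).
have -> : Ev D :&: [set S | par x S] = [set S in Ev D | par x S].
  by apply/setP => S; rewrite !inE.
have -> : Ev D :\: [set S | par x S] = [set S in Ev D | ~~ par x S].
  by apply/setP => S; rewrite !inE andbC.
rewrite e1 e2 => <-.
have := half true; have := half false; simpl => h1 h2.
rewrite muln2 -addnn; congr (_ + _)%N; apply/eqP; by rewrite eqn_leq h1 h2.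
Qed.

Lemma sum_bool_card (T : finType) (A : {set T}) (p : pred T) :
  \sum_(t in A) ((p t)%:R : rat) = (#|[set t in A | p t]|)%:R.
Proof.
rewrite (eq_bigr (fun t => if p t then 1 else 0)); last by move=> t _; case: (p t).
rewrite -big_mkcondr /=.
rewrite (eq_bigl (fun t => t \in [set t in A | p t])); last by move=> t; rewrite inE.
by rewrite sumr_const.
Qed.

Lemma NAE_01 (J : finType) (x : bvec J) :
  NAE x = ([exists i, x i] && [exists j, ~~ x j])%:R.
Proof.
rewrite /NAE /weight.
have h1 : (0 < #|[set i | x i]|)%N = [exists i, x i].
  apply/idP/existsP => [/card_gt0P [i]|[i xi]]; first by rewrite inE; exists i.
  by apply/card_gt0P; exists i; rewrite inE.
have h2 : (0 < #|~: [set i | x i]|)%N = [exists j, ~~ x j].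
  apply/idP/existsP => [/card_gt0P [i]|[i xi]]; first by rewrite !inE; exists i.
  by apply/card_gt0P; exists i; rewrite !inE.
have h3 := cardsC [set i | x i].
rewrite -h1 -h2.
have -> : (0 < #|[set i | x i]| <= #|J| - 1)%N =
    (0 < #|[set i | x i]|)%N && (0 < #|~: [set i | x i]|)%N.
  move: h3; set p := #|[set i | x i]|; set q := #|~: [set i | x i]| => h3.
  lia.
by case: (_ && _).
Qed.

Lemma bool_key (xa ya xb yb xa' ya' xb' yb' : bool) :
  xa -> ~~ xb -> ya' -> ~~ yb' ->
  ((xa (+) ya == xb (+) yb) -> xa = xb) ->
  ((xa (+) ya == xa' (+) ya') -> xa = xa' /\ ya = ya') ->
  ((xa (+) ya == xb' (+) yb') -> xa = xb' /\ ya = yb') ->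
  ((xb (+) yb == xa' (+) ya') -> xb = xa' /\ yb = ya') ->
  ((xb (+) yb == xb' (+) yb') -> xb = xb' /\ yb = yb') -> False.
Proof.
by case: xa; case: xb; case: ya; case: yb; case: xa'; case: ya'; case: xb'; case: yb' => //= *;
  intuition discriminate.
Qed.


Lemma mixed_inv (J : finType) (x y : bvec J) (S : {set J}) :
  S \subset [set i | xorv x y i] ->
  [exists i, exists j, [&& ~~ xorv x y i, ~~ xorv x y j & xorv x (charv S) i != xorv x (charv S) j]]
  = [exists i, exists j, [&& ~~ xorv x y i, ~~ xorv x y j & x i != x j]].
Proof.
move=> sS.
have key k : ~~ xorv x y k -> xorv x (charv S) k = x k.
  move=> nk; rewrite ffunE ffunE.
  have -> : (k \in S) = false.
    by apply/negbTE; apply: contra nk => /(subsetP sS); rewrite inE.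
  by rewrite addbF.
apply/existsP/existsP => -[i /existsP [j /and3P [ni nj e]]]; exists i; apply/existsP; exists j;
  rewrite ni nj /=; by move: e; rewrite (key i ni) (key j nj).
Qed.

Lemma NAE_windable (J : finType) : windable (@NAE J).
Proof.
split => [x|]; first by rewrite /NAE; case: ifP.
pose D (x y : bvec J) := [set i | xorv x y i].
pose mixed (x y : bvec J) :=
  [exists i, exists j, [&& ~~ xorv x y i, ~~ xorv x y j & x i != x j]].
pose g (x y : bvec J) (S : {set J}) : rat :=
  if mixed x y then (S == set0)%:R
  else (2 / (#|Ev (D x y)|)%:R) * (par x S)%:R.
exists (fun x y M => \sum_(S in Ev (D x y)) (M == canon (D x y) S)%:R * g x y S).
split; [|split].
- move=> x y M _; apply: sumr_ge0 => S _; apply: mulr_ge0 => //.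
  rewrite /g; case: ifP => _ //; apply: mulr_ge0 => //; exact: divr_ge0.
- move=> x y; rewrite exchange_big /=.
  rewrite (eq_bigr (fun S => g x y S)); last first.
    move=> S; rewrite inE => /andP [sS ev].
    rewrite (bigD1 (canon (D x y) S)) /=; last exact: canon_match.
    by rewrite eqxx mul1r big1 ?addr0 // => M /andP [_ /negbTE ->]; rewrite mul0r.
  have Hnc (v : bvec J) i j : v i != v j ->
      [exists k, v k] && [exists k, ~~ v k] = true.
    case vi: (v i); case vj: (v j) => // _; apply/andP; split; apply/existsP;
      by [exists i; rewrite vi | exists j; rewrite vj].
  case mix: (mixed x y); rewrite /g mix.
  + rewrite (bigD1 set0) /=; last by rewrite inE sub0set cards0.
    rewrite eqxx big1 ?addr0; last by move=> S /andP [_ /negbTE ->].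
    move/existsP: mix => [i /existsP [j /and3P [ni nj xij]]].
    have yi : y i = x i by move: ni; rewrite ffunE; case: (x i); case: (y i).
    have yj : y j = x j by move: nj; rewrite ffunE; case: (x j); case: (y j).
    by rewrite !NAE_01 (Hnc x i j) // (Hnc y i j) ?yi ?yj // mulr1.
  + rewrite -mulr_sumr sum_bool_card.
    case: (boolP [exists i, exists j, [&& xorv x y i, xorv x y j & x i != x j]]).
      move=> /existsP [i /existsP [j /and3P [di dj xij]]].
      have hc := count_par (D := D x y) (x := x) (i := i) (j := j).
      rewrite !inE in hc; have {}hc := hc di dj xij.
      have yi : y i = ~~ x i by move: di; rewrite ffunE; case: (x i); case: (y i).
      have yj : y j = ~~ x j by move: dj; rewrite ffunE; case: (x j); case: (y j).
      rewrite !NAE_01 (Hnc x i j) // (Hnc y i j) ?yi ?yj; last first.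
        by move: xij; case: (x i); case: (x j).
      rewrite -hc natrM mulr1.
      have a0 : (#|[set S in Ev (D x y) | par x S]|%:R : rat) != 0.
        apply/eqP => a0; move: hc; rewrite (_ : #|_| = 0%N); last by apply/eqP; rewrite -(eqr_nat rat) a0.
        move/esym/eqP; rewrite cards_eq0 => /eqP E0.
        have : set0 \in Ev (D x y) by rewrite inE sub0set cards0.
        by rewrite E0 inE.
      set a := (#|_|%:R : rat) in a0 *.
      rewrite invfM (_ : true%:R = 1) //; field; by rewrite a0.
    move=> nd.
    have E0 : [set S in Ev (D x y) | par x S] = set0.
      apply/setP => S; rewrite !inE; apply/negbTE; apply/andP => -[/andP [sS evS] pS].
      case: (set_0Vmem S) => [S0|[k kS]].
        by move: pS; rewrite /par S0 (_ : [set k in set0 | x k] = set0) ?cards0 //;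
          apply/setP => k; rewrite !inE.
      have hk : forall l, l \in S -> x l = x k.
        move=> l lS; apply/eqP; apply: contraNT nd => nl; apply/existsP; exists l;
          apply/existsP; exists k.
        have dl : xorv x y l by move: (subsetP sS l lS); rewrite inE.
        have dk : xorv x y k by move: (subsetP sS k kS); rewrite inE.
        by rewrite nl dl dk.
      move: pS; rewrite /par.
      case xk: (x k).
        rewrite (_ : [set l in S | x l] = S) ?(negbTE evS) //.
        by apply/setP => l; rewrite !inE; case lS: (l \in S) => //; rewrite hk.
      rewrite (_ : [set l in S | x l] = set0) ?cards0 //.
      by apply/setP => l; rewrite !inE; case lS: (l \in S) => //; rewrite hk.
    rewrite E0 cards0 mulr0 !NAE_01.
    case: (existsP) => [[a xa]|] /=; last by rewrite mul0r.
    case: (existsP) => [[b xb]|] /=; last by rewrite mul0r.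
    case: (existsP) => [[a' ya']|] /=; last by rewrite mulr0.
    case: (existsP) => [[b' yb']|] /=; last by rewrite mulr0.
    exfalso.
    have Hc : forall k l, (x k (+) y k == x l (+) y l) -> x k = x l /\ y k = y l.
      move=> k l /eqP e.
      have xe : x k = x l.
        case dk: (x k (+) y k).
          apply/eqP; apply: contraNT nd => nl; apply/existsP; exists k; apply/existsP; exists l.
          by rewrite !ffunE dk -e dk nl.
        apply/eqP; apply: contraFT mix => nl; apply/existsP; exists k; apply/existsP; exists l.
        by rewrite !ffunE dk -e dk nl.
      split => //; move: e; rewrite xe; by case: (x l); case: (y k); case: (y l).
    apply: (bool_key (xa := x a) (ya := y a) (xb := x b) (yb := y b)
                     (xa' := x a') (ya' := y a') (xb' := x b') (yb' := y b')) => //;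
      try exact: Hc; by move/Hc => [].
- move=> x y M S hM hS; rewrite /g /mixed /D xorvK.
  apply: eq_bigr => T; rewrite inE => /andP [sT evT].
  case: (eqVneq M (canon (D x y) T)) => [eM|]; last by rewrite !mul0r.
  have hSD : S \subset D x y.
    by move: hM; rewrite inE => /andP [/partitionS hP _]; apply: hP.
  rewrite mixed_inv //.
  case: ifP => // _.
  rewrite par_xor par_block ?addbF //.
  move: hS; rewrite eM => /canon_blocks /orP [->//|/existsP [i /andP [iDT eS]]].
  apply/orP; right; apply/existsP; exists i; rewrite eS andbT.
  by move: iDT; rewrite !inE => /andP [->].
Qed.

Theorem lemma10 (J : finType) :
  windable (@Even J) /\ windable (@Odd J) /\ windable (@NAE J).
Proof.
split; [|split].
- apply: (@parity_windable J (fun b => if ~~ b then 1 else 0)).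
    by case.
  by case; case.
- apply: (@parity_windable J (fun b => if b then 1 else 0)).
    by case.
  by case; case.
- exact: NAE_windable.
Qed.
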